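(* Let $r\geq 3$ and $i\in\{1,2,\dots,r-1\}$, and let $M$ be the binary matroid obtained from the binary projective geometry $PG(r-1,2)$ (of rank $r$) by deleting the elements of a rank-$(r-i)$ flat. Then $M$ has a flat $F$ such that $M|F$ is isomorphic to either $M(K_4)$ or $U_{3,4}$. *)

(* Defs.v *)
From HB Require Import structures.
From mathcomp Require Import all_boot all_order all_algebra.
Set Implicit Arguments. Unset Strict Implicit. Unset Printing Implicit Defensive.
Import GRing.Theory.
Local Open Scope ring_scope.

(* Binary vectors of length r: the points of PG(r-1,2) are the nonzero ones. *)
Notation bvec r := ('rV['F_2]_r).

Definition brank (r : nat) (X : {set bvec r}) : nat := \dim <<enum X>>%VS.

Definition bindep (r : nat) (X : {set bvec r}) : bool := brank X == #|X|.

(* M = PG(r-1,2) \ (points of the flat W): ground set = nonzero vectors not in W.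
   A rank-k flat of PG(r-1,2) is the set of nonzero vectors of a k-dim subspace. *)
Definition ground (r : nat) (W : {vspace bvec r}) : {set bvec r} :=
  [set v : bvec r | (v != 0) && (v \notin W)].

Definition is_flat (r : nat) (E F : {set bvec r}) : Prop :=
  F \subset E /\
  forall e, e \in E -> brank (e |: F) = brank F -> e \in F.

Definition restr_iso (r : nat) (F : {set bvec r}) (U : finType)
    (indU : {set U} -> bool) : Prop :=
  exists f : bvec r -> U,
    [/\ {in F &, injective f}, f @: F = [set: U] &
        forall X : {set bvec r}, X \subset F -> bindep X = indU (f @: X)].

Definition U34_indep (X : {set 'I_4}) : bool := (#|X| <= 3)%N.

(* The cycle matroid M(K_4): edges are 2-subsets of the vertex set 'I_4;
   independent sets are forests, i.e. edge sets containing no cycle, which we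
   express as: every nonempty edge subset Y spans more than #|Y| vertices. *)
Definition K4edge := {e : {set 'I_4} | #|e| == 2}.
Definition K4_verts (Y : {set K4edge}) : {set 'I_4} :=
  \bigcup_(e in Y) val e.
Definition K4_indep (X : {set K4edge}) : bool :=
  [forall Y : {set K4edge}, (Y \subset X) && (Y != set0) ==> (#|Y| < #|K4_verts Y|)%N].

(* Main.v *)
Require Import Defs.
From HB Require Import structures.
From mathcomp Require Import all_boot all_order all_algebra.
From Stdlib Require Import Classical.
From mathcomp Require Import zify.
Set Implicit Arguments. Unset Strict Implicit. Unset Printing Implicit Defensive.
Import GRing.Theory.

Section Gen.
Local Open Scope ring_scope.
Variable r : nat.
Notation V := (bvec r).

Lemma F2_cases (k : 'F_2) : k = 0 \/ k = 1.
Proof. case: k => [[|[|m]] H]; [left; exact: val_inj | right; exact: val_inj | by []]. Qed.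

Lemma F2_2 : (2%:R : 'F_2) = 0.
Proof. exact: val_inj. Qed.

Lemma addvv (v : V) : v + v = 0.
Proof. by rewrite -mulr2n -scaler_nat F2_2 scale0r. Qed.

Lemma bindepE (X : {set V}) : bindep X = free (enum X).
Proof. by rewrite /bindep /brank /free cardE. Qed.

Lemma bindep_sub (X Y : {set V}) : Y \subset X -> bindep X -> bindep Y.
Proof.
rewrite !bindepE => sYX fX.
have -> : free (enum Y) = free (filter (mem Y) (enum X)).
  apply: perm_free; apply: uniq_perm; first exact: enum_uniq.
    by rewrite filter_uniq // enum_uniq.
  move=> x; rewrite mem_enum [in RHS]mem_filter mem_enum.
  by apply/idP/andP => [xY|[]//]; split => //; exact: (subsetP sYX _ xY).
exact: (filter_free _ fX).
Qed.

Lemma bindep_dim (X : {set V}) (U : {vspace V}) :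
  {subset X <= U} -> (\dim U < #|X|)%N -> ~~ bindep X.
Proof.
move=> sXU lt; rewrite /bindep /brank; apply/negP => /eqP E.
have : (\dim <<enum X>> <= \dim U)%N.
  apply: dimvS; apply/span_subvP => x; rewrite mem_enum; exact: sXU.
by rewrite E leqNgt lt.
Qed.

Lemma bridge (X : {set V}) : ~~ bindep X ->
  exists Y : {set V}, [/\ Y \subset X, Y != set0 & \sum_(y in Y) y = 0].
Proof.
rewrite bindepE => nf.
set s := enum X in nf.
have nf' : ~ (forall k, \sum_(i < size s) k i *: (in_tuple s)`_i = 0 -> forall i, k i = 0).
  by move=> H; move/negP: nf; apply; exact: (introT (@freeP _ _ _ (in_tuple s)) H).
have [k nk] := not_all_ex_not _ _ nf'.
have [sk0 nk'] := imply_to_and _ _ nk.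
have [i0 ki0] := not_all_ex_not _ _ nk'.
exists [set s`_i | i : 'I_(size s) in [set i : 'I_(size s) | k i != 0]]; split.
- apply/subsetP => _ /imsetP [i _ ->].
  by rewrite -mem_enum -/s mem_nth.
- apply/set0Pn; exists s`_i0; apply/imsetP; exists i0 => //.
  by rewrite inE; apply/eqP.
- rewrite big_imset /=; last first.
    by move=> i j _ _ /eqP; rewrite nth_uniq ?enum_uniq // => /eqP /val_inj.
  rewrite -[RHS]sk0 big_mkcond /=; apply: eq_bigr => i _; rewrite inE.
  by case: (F2_cases (k i)) => ->; rewrite ?eqxx ?scale0r ?scale1r.
Qed.

Lemma pullback (T : finType) (p : T -> V) (Z : {set T}) :
  injective p -> ~~ bindep (p @: Z) ->
  exists Y : {set T}, [/\ Y \subset Z, Y != set0 & \sum_(t in Y) p t = 0].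
Proof.
move=> ip /bridge [Y' [sY' nY' s0]].
exists [set t in Z | p t \in Y']; split.
- by apply/subsetP => t; rewrite inE => /andP[].
- case/set0Pn: nY' => y yY'; have := subsetP sY' _ yY'; case/imsetP => t tZ ety.
  by apply/set0Pn; exists t; rewrite inE tZ -ety.
- have eY : Y' = p @: [set t in Z | p t \in Y'].
    apply/setP => y; apply/idP/imsetP => [yY' | [t]].
      have := subsetP sY' _ yY'; case/imsetP => t tZ ety.
      by exists t => //; rewrite inE tZ -ety.
    by rewrite inE => /andP[_ ?] ->.
  transitivity (\sum_(y in Y') y); last exact: s0.
  by rewrite [in RHS]eY big_imset //= => ? ? _ _; apply: ip.
Qed.

Lemma flat_of (T : finType) (p : T -> V) (W S : {vspace V}) :
  (forall t, p t \in S) -> (forall t, p t \notin W) ->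
  (forall v, v \in S -> v != 0 -> v \notin W -> exists t, v = p t) ->
  is_flat (ground W) (p @: setT).
Proof.
move=> pS pW Sp; set F := p @: setT; split.
  apply/subsetP => _ /imsetP [t _ ->]; rewrite inE pW andbT.
  by apply: contra (pW t) => /eqP ->; rewrite mem0v.
move=> e; rewrite inE => /andP [e0 eW] E.
have sub : (<<enum F>> <= <<enum (e |: F)>>)%VS.
  apply/span_subvP => x; rewrite mem_enum => xF; apply: memv_span.
  by rewrite mem_enum setU1r.
have eq : <<enum F>>%VS = <<enum (e |: F)>>%VS.
  by apply/eqP; rewrite eqEdim sub /=; move: E; rewrite /brank => ->.
have eS : e \in S.
  have : e \in <<enum F>>%VS by rewrite eq memv_span // mem_enum setU11.
  apply: subvP; apply/span_subvP => x; rewrite mem_enum => /imsetP [t _ ->].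
  exact: pS.
have [t ->] := Sp e eS e0 eW.
by apply/imsetP; exists t.
Qed.

Lemma restr_of (T : finType) (t0 : T) (p : T -> V) (indU : {set T} -> bool) :
  injective p -> (forall Z : {set T}, bindep (p @: Z) = indU Z) -> restr_iso (p @: setT) indU.
Proof.
move=> ip H.
pose f v := odflt t0 [pick t | p t == v].
have fpK t : f (p t) = t.
  rewrite /f; case: pickP => [s /eqP /ip -> // | /(_ t)]; by rewrite eqxx.
exists f; split.
- by move=> _ _ /imsetP [s _ ->] /imsetP [t _ ->]; rewrite !fpK => ->.
- apply/setP => t; rewrite in_setT; apply/imsetP; exists (p t); last by rewrite fpK.
  by apply/imsetP; exists t.
- move=> X sX.
  have eX : X = p @: (f @: X).
    apply/setP => x; apply/idP/imsetP => [xX | [t /imsetP [y yX ->] ->]].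
      have := subsetP sX _ xX; case/imsetP => t _ ext.
      exists t; last by [].
      by apply/imsetP; exists x; rewrite // ext fpK.
    have := subsetP sX _ yX; case/imsetP => s _ e; rewrite e fpK -e //.
  by rewrite {1}eX H.
Qed.

End Gen.

Section Coord.
Local Open Scope ring_scope.
Definition C := ('F_2 * 'F_2 * 'F_2)%type.

Lemma F2_cases' (k : 'F_2) : k = 0 \/ k = 1.
Proof. case: k => [[|[|m]] H]; [left; exact: val_inj | right; exact: val_inj | by []]. Qed.

Lemma E4 (t : 'I_4) : t = ord0 \/ t = lift ord0 ord0 \/ t = lift ord0 (lift ord0 ord0)
   \/ t = lift ord0 (lift ord0 (lift ord0 ord0)).
Proof.
case: t => [[|[|[|[|n]]]] h]; [left|right;left|right;right;left|right;right;right|by []];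
  exact: val_inj.
Qed.

Lemma C2 (c : C) : c + c = 0.
Proof.
case: c => [[a b] e]; case: (F2_cases' a) => ->; case: (F2_cases' b) => ->;
  case: (F2_cases' e) => ->; apply/eqP; by vm_compute.
Qed.

Lemma C_opp (c : C) : - c = c.
Proof. by apply/eqP; rewrite eq_sym -subr_eq0 opprK C2. Qed.

Lemma C_mulrn (c : C) n : c *+ n = if odd n then c else 0.
Proof.
elim: n => [|n IH]; first by rewrite mulr0n.
by rewrite mulrS IH /=; case: (odd n); rewrite /= ?C2 ?addr0.
Qed.

Definition Q (t : 'I_4) : C := nth 0 [:: (1,0,0); (1,1,0); (1,0,1); (1,1,1)] t.

Lemma bits4 (m : 'I_4 -> bool) :
  \sum_(t < 4) (if m t then Q t else 0) = 0 -> forall t, m t = m ord0.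
Proof.
rewrite !big_ord_recl big_ord0 => H t.
case: (E4 t) => [->|[->|[->|->]]] //; move: H;
case: (m ord0); case: (m (lift ord0 ord0)); case: (m (lift ord0 (lift ord0 ord0)));
case: (m (lift ord0 (lift ord0 (lift ord0 ord0)))); move/eqP => h; vm_compute in h => //.
Qed.

Variable r : nat.
Notation V := (bvec r).
Variables b1 b2 b3 : V.
Hypothesis fb : free [:: b1; b2; b3].
Definition point (c : C) : V := c.1.1 *: b1 + c.1.2 *: b2 + c.2 *: b3.

Lemma pointD c d : point (c + d) = point c + point d.
Proof.
case: c => [[c1 c2] c3]; case: d => [[d1 d2] d3]; rewrite /point /= !scalerDl.
by rewrite [in RHS]addrACA (addrACA (c1 *: b1) (c2 *: b2)).
Qed.

Lemma point0 : point 0 = 0.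
Proof. by rewrite /point /= !scale0r !addr0. Qed.

Lemma point_mulrn c n : point (c *+ n) = point c *+ n.
Proof. by elim: n => [|n IH]; rewrite ?mulr0n ?point0 // !mulrS pointD IH. Qed.

Lemma point_sum (I : finType) (P : pred I) (F : I -> C) :
  point (\sum_(i | P i) F i) = \sum_(i | P i) point (F i).
Proof. exact: (big_morph point pointD point0). Qed.

Lemma point_eq0 c : point c = 0 -> c = 0.
Proof.
have /freeP H : free [tuple b1; b2; b3] := fb.
case: c => [[c1 c2] c3] /= pc.
have := H (fun i => nth 0 [:: c1; c2; c3] i).
rewrite !big_ord_recl big_ord0 /= addr0 addrA => /(_ pc) K.
have := K ord0; have := K (lift ord0 ord0); have := K (lift ord0 (lift ord0 ord0)).
by move=> /= -> -> ->.
Qed.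

Lemma point_inj : injective point.
Proof.
move=> c d e; have : point (c + d) = 0 by rewrite pointD e addvv.
by move/point_eq0/eqP; rewrite addr_eq0 C_opp => /eqP.
Qed.
Lemma point_span c : point c \in <<[:: b1; b2; b3]>>%VS.
Proof.
by rewrite /point !memvD // memvZ // memv_span // !inE eqxx ?orbT.
Qed.

Lemma span3 v : v \in <<[:: b1; b2; b3]>>%VS -> exists c, v = point c.
Proof.
rewrite !span_cons span_nil addv0.
case/memv_addP => x /vlineP [k1 ->] [y /memv_addP [y1 /vlineP [k2 ->] [y2 /vlineP [k3 ->] ->]] ->].
by exists (k1, k2, k3); rewrite /point /= addrA.
Qed.
End Coord.

Section U34.
Local Open Scope ring_scope.
Variable r : nat.
Notation V := (bvec r).
Variables (W : {vspace V}) (u w1 w2 : V).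
Hypotheses (fb : free [:: u; w1; w2]) (w1W : w1 \in W) (w2W : w2 \in W) (uW : u \notin W).

Definition q (t : 'I_4) := point u w1 w2 (Q t).

Lemma q_inj : injective q.
Proof.
move=> s t /(point_inj fb) /eqP.
suff : (Q s == Q t) ==> (s == t) by move=> /implyP H /H /eqP.
by case: (E4 s) => [->|[->|[->|->]]]; case: (E4 t) => [->|[->|[->|->]]]; vm_compute.
Qed.

Lemma pointW c : c.1.1 = 1 -> point u w1 w2 c \notin W.
Proof.
case: c => [[c1 c2] c3] /= ->; rewrite /point scale1r -addrA.
apply: contra uW => H.
have : (c2 *: w1 + c3 *: w2) \in W by rewrite memvD // memvZ.
by move=> H2; rewrite -(addrK (c2 *: w1 + c3 *: w2) u) memvB.
Qed.

Lemma qW t : q t \notin W.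
Proof. by apply: pointW; case: (E4 t) => [->|[->|[->|->]]]. Qed.

Lemma qmem v : v \in <<[:: u; w1; w2]>>%VS -> v != 0 -> v \notin W -> exists t, v = q t.
Proof.
move=> /span3 [[[c1 c2] c3] ->] _.
case: (F2_cases' c1) => ->.
  by rewrite /point /= scale0r add0r memvD // memvZ.
move=> _; rewrite /q.
case: (F2_cases' c2) => ->; case: (F2_cases' c3) => ->.
- by exists (@Ordinal 4 0 isT).
- by exists (@Ordinal 4 2 isT).
- by exists (@Ordinal 4 1 isT).
- by exists (@Ordinal 4 3 isT).
Qed.

Lemma U34_iso (Z : {set 'I_4}) : bindep (q @: Z) = U34_indep Z.
Proof.
rewrite /U34_indep; case: (leqP #|Z| 3) => hZ.
  apply/negP => nd; have [Y [sYZ nY s0]] := pullback q_inj (introN idP nd).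
  have : \sum_(t < 4) (if t \in Y then Q t else 0) = 0.
    by rewrite -big_mkcond; apply: (point_eq0 fb); rewrite point_sum.
  move/bits4 => E.
  case E0 : (ord0 \in Y).
    have YT : Y = setT by apply/setP => t; rewrite inE E E0.
    have := subset_leq_card sYZ; rewrite YT cardsT card_ord => h.
    by have := leq_trans h hZ.
  by case/negP: nY; apply/eqP/setP => t; rewrite inE E E0.
apply/negbTE; apply: (bindep_dim (U := <<[:: u; w1; w2]>>%VS)).
  by move=> _ /imsetP [t _ ->]; apply: point_span.
by rewrite card_imset; [apply: leq_ltn_trans (dim_span _) _ | apply: q_inj].
Qed.

End U34.

Section Apre.
Local Open Scope ring_scope.
Definition A (t : 'I_4) : C := nth 0 [:: 0; (1,0,0); (0,1,0); (1,1,1)] t.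

Lemma bitsA (m : 'I_4 -> bool) :
  (\sum_(t < 4) (if m t then A t else 0) = 0)%R -> forall t, t != ord0 -> m t = false.
Proof.
rewrite !big_ord_recl big_ord0 => H t.
case: (E4 t) => [->|[->|[->|->]]] //; move: H;
case: (m ord0); case: (m (lift ord0 ord0)); case: (m (lift ord0 (lift ord0 ord0)));
case: (m (lift ord0 (lift ord0 (lift ord0 ord0)))); move/eqP => h; vm_compute in h => //.
Qed.

Lemma A_notW (i j : 'I_4) (k : 'F_2) : i != j -> (A i + A j != (0, 0, k))%R.
Proof.
case: (F2_cases' k) => ->;
by case: (E4 i) => [->|[->|[->|->]]]; case: (E4 j) => [->|[->|[->|->]]]; vm_compute.
Qed.

End Apre.

Lemma card2_ok (i j : 'I_4) : i != j -> #|[set i; j]| == 2.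
Proof. by move=> h; rewrite cards2 h. Qed.

Definition mkedge (i j : 'I_4) (h : i != j) : K4edge := exist _ [set i; j] (card2_ok h).

Lemma edge2 (e : K4edge) : exists i j, i != j /\ val e = [set i; j].
Proof. exact/cards2P/(valP e). Qed.

Lemma handshake (Y : {set K4edge}) :
  \sum_(v : 'I_4) #|[set e in Y | v \in val e]| = 2 * #|Y|.
Proof.
have cE (T : finType) (B : {set T}) : #|B| = \sum_(x : T) (x \in B).
  by rewrite -sum1_card big_mkcond; apply: eq_bigr => x _; case: (x \in B).
transitivity (\sum_(v : 'I_4) \sum_(e in Y) (v \in val e)).
  apply: eq_bigr => v _; rewrite cE [in RHS]big_mkcond; apply: eq_bigr => e _.
  by rewrite inE; case: (e \in Y).
rewrite exchange_big /=.
transitivity (\sum_(e in Y) 2).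
  by apply: eq_bigr => e _; rewrite -cE; apply/eqP; exact: (valP e).
by rewrite sum_nat_const mulnC.
Qed.

Section K4.
Local Open Scope ring_scope.
Variable r : nat.
Notation V := (bvec r).
Variables (W : {vspace V}) (a1 a2 w : V).
Hypotheses (fb : free [:: a1; a2; w]) (eW : W = <[w]>%VS).

Definition av (v : 'I_4) : V := point a1 a2 w (A v).
Definition pe (e : K4edge) : V := \sum_(v in val e) av v.

Lemma pe_pair (e : K4edge) i j : val e = [set i; j] -> i != j ->
  pe e = point a1 a2 w (A i + A j).
Proof.
by move=> E ij; rewrite /pe E big_setU1 ?big_set1 ?inE //= pointD.
Qed.

Lemma sum_pe (Y : {set K4edge}) :
  \sum_(e in Y) pe e =
  point a1 a2 w (\sum_(v : 'I_4) A v *+ #|[set e in Y | v \in val e]|).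
Proof.
rewrite point_sum.
transitivity (\sum_(e in Y) \sum_(v : 'I_4) (if v \in val e then av v else 0)).
  by apply: eq_bigr => e _; rewrite /pe big_mkcond.
rewrite exchange_big /=; apply: eq_bigr => v _.
rewrite point_mulrn -/(av v) -big_mkcondr.
rewrite (eq_bigl (mem [set e in Y | v \in val e])) ?sumr_const // => e.
by rewrite !inE.
Qed.

Lemma parity (Y : {set K4edge}) : \sum_(e in Y) pe e = 0 ->
  (#|K4_verts Y| <= #|Y|)%N.
Proof.
rewrite sum_pe => /(point_eq0 fb).
set d := fun v => #|[set e in Y | v \in val e]|.
under eq_bigr => v _ do rewrite C_mulrn.
move/(bitsA (m := fun v => odd (d v))) => E.
have E0 : odd (d ord0) = false.
  have := handshake Y; rewrite !big_ord_recl big_ord0 => h.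
  have : odd (2 * #|Y|)%N = false by rewrite oddM.
  have E' t : t != ord0 -> odd #|[set e in Y | t \in val e]| = false := E t.
  rewrite -h !oddD (E' (lift ord0 ord0)) // (E' (lift ord0 (lift ord0 ord0))) //.
  by rewrite (E' (lift ord0 (lift ord0 (lift ord0 ord0)))) //= addbF.
have Ev v : odd (d v) = false by case: (eqVneq v ord0) => [->|/E]. 
have ge2 v : v \in K4_verts Y -> (2 <= d v)%N.
  case/bigcupP => e eY ve.
  have : (0 < d v)%N by apply/card_gt0P; exists e; rewrite inE eY.
  by have := Ev v; case: (d v) => [|[|n]].
have : (2 * #|K4_verts Y| <= 2 * #|Y|)%N.
  rewrite -handshake mulnC -sum_nat_const.
  rewrite [X in (_ <= X)%N](bigID (mem (K4_verts Y))) /=.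
  apply: leq_trans (leq_addr _ _).
  by apply: leq_sum => v vV; exact: ge2.
by rewrite leq_pmul2l.
Qed.

Lemma addvv' (v : V) : v + v = 0.
Proof. by rewrite -mulr2n -scaler_nat F2_2 scale0r. Qed.

Lemma pe_inj : injective pe.
Proof.
move=> e e' E; apply/eqP; apply/negPn/negP => ne.
have := parity (Y := [set e; e']).
rewrite big_setU1 ?big_set1 ?inE //= E addvv' => /(_ erefl).
rewrite /K4_verts big_setU1 ?big_set1 ?inE //= cards2 ne.
have := cardsUI (val e) (val e'); rewrite (eqP (valP e)) (eqP (valP e')) => H.
move=> le2.
have h2 : (2 <= #|val e :&: val e'|)%N.
  by rewrite -(leq_add2l #|val e :|: val e'|) H; apply: leq_add.
have /eqP I1 : val e :&: val e' == val e.
  by rewrite eqEcard subsetIl /= (eqP (valP e)).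
have /eqP I2 : val e :&: val e' == val e'.
  by rewrite eqEcard subsetIr /= (eqP (valP e')).
by case/negP: ne; apply/eqP/val_inj; rewrite -I1 I2.
Qed.

Lemma pe_av e : exists i j, [/\ i != j, val e = [set i; j] & pe e = av i + av j].
Proof. have [i [j [ij E]]] := edge2 e; exists i, j; split => //. by rewrite (pe_pair E ij) pointD. Qed.

Lemma dep_A (Y : {set K4edge}) : Y != set0 -> (#|K4_verts Y| <= #|Y|)%N -> ~~ bindep (pe @: Y).
Proof.
case/set0Pn => e0 e0Y le.
have [i0 [j0 [_ E0 _]]] := pe_av e0.
have i0V : i0 \in K4_verts Y by apply/bigcupP; exists e0 => //; rewrite E0 !inE eqxx.
set G := [seq av v + av i0 | v <- enum (K4_verts Y :\ i0)].
have gen k : k \in K4_verts Y -> av k + av i0 \in <<G>>%VS.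
  move=> kV; case: (eqVneq k i0) => [->|ki0]; first by rewrite addvv' mem0v.
  by apply: memv_span; apply: map_f; rewrite mem_enum !inE ki0.
apply: (bindep_dim (U := <<G>>%VS)).
  move=> _ /imsetP [e eY ->].
  have [i [j [ij E ->]]] := pe_av e.
  have iV : i \in K4_verts Y by apply/bigcupP; exists e => //; rewrite E !inE eqxx.
  have jV : j \in K4_verts Y by apply/bigcupP; exists e => //; rewrite E !inE eqxx orbT.
  have -> : av i + av j = (av i + av i0) + (av j + av i0) by rewrite [RHS]addrACA addvv' addr0.
  by rewrite memvD // gen.
rewrite card_imset; last exact: pe_inj.
apply: leq_ltn_trans (dim_span _) _.
rewrite size_map -cardE.
apply: (leq_trans _ le).
by rewrite [X in (_ < X)%N](cardsD1 i0 (K4_verts Y)) i0V add1n ltnSn.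
Qed.

Lemma K4_iso (Z : {set K4edge}) : bindep (pe @: Z) = K4_indep Z.
Proof.
apply/idP/idP => [bZ | iZ].
  apply/forallP => Y; apply/implyP => /andP [sYZ nY]; rewrite ltnNge; apply/negP => le.
  have := dep_A nY le; move/negP; apply.
  by apply: bindep_sub bZ; apply: imsetS.
apply/negP => nd; have [Y [sYZ nY s0]] := pullback pe_inj (introN idP nd).
move/forallP: iZ => /(_ Y); rewrite sYZ nY /= ltnNge => /negP; apply.
exact: parity.
Qed.

Lemma peS e : pe e \in <<[:: a1; a2; w]>>%VS.
Proof. have [i [j [ij E _]]] := pe_av e; rewrite (pe_pair E ij); exact: point_span. Qed.

Lemma peW e : pe e \notin W.
Proof.
have [i [j [ij E _]]] := pe_av e; rewrite (pe_pair E ij) eW.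
apply/negP => /vlineP [k Hk].
have : point a1 a2 w (A i + A j) = point a1 a2 w (0, 0, k).
  by rewrite Hk /point /= !scale0r !add0r.
by move/(point_inj fb) => /eqP; rewrite (negbTE (A_notW k ij)).
Qed.

Lemma pemem v : v \in <<[:: a1; a2; w]>>%VS -> v != 0 -> v \notin W -> exists e, v = pe e.
Proof.
move=> /span3 [[[c1 c2] c3] ->].
have ex (c : C) (i j : 'I_4) (h : i != j) : A i + A j = c -> exists e, point a1 a2 w c = pe e.
  by move=> Ec; exists (mkedge h); rewrite (pe_pair (e := mkedge h) (i:=i) (j:=j)) // Ec.
case: (F2_cases' c1) => ->; case: (F2_cases' c2) => ->; case: (F2_cases' c3) => ->.
- by rewrite /point /= !scale0r !addr0 eqxx.
- by rewrite eW /point /= !scale0r !add0r scale1r memv_line.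
- by move=> _ _; apply: (ex _ (@Ordinal 4 0 isT) (@Ordinal 4 2 isT) isT); apply/eqP; vm_compute.
- by move=> _ _; apply: (ex _ (@Ordinal 4 1 isT) (@Ordinal 4 3 isT) isT); apply/eqP; vm_compute.
- by move=> _ _; apply: (ex _ (@Ordinal 4 0 isT) (@Ordinal 4 1 isT) isT); apply/eqP; vm_compute.
- by move=> _ _; apply: (ex _ (@Ordinal 4 2 isT) (@Ordinal 4 3 isT) isT); apply/eqP; vm_compute.
- by move=> _ _; apply: (ex _ (@Ordinal 4 1 isT) (@Ordinal 4 2 isT) isT); apply/eqP; vm_compute.
- by move=> _ _; apply: (ex _ (@Ordinal 4 0 isT) (@Ordinal 4 3 isT) isT); apply/eqP; vm_compute.
Qed.

End K4.

Section Setup.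
Variable r : nat.
Notation V := (bvec r).

Lemma dimfull : \dim (fullv : {vspace V}) = r.
Proof. by rewrite dimvf dim_matrix mul1r. Qed.

Lemma out (U : {vspace V}) : \dim U < r -> exists x, x \notin U.
Proof.
move=> lt; have : ~~ (fullv <= U)%VS.
  by apply/negP => /dimvS; rewrite dimfull leqNgt lt.
by case/subvPn => x _ xU; exists x.
Qed.

Lemma two_in (W : {vspace V}) : 2 <= \dim W ->
  exists w1 w2, [/\ w1 \in W, w2 \in W & free [:: w1; w2]].
Proof.
move: (vbasisP W); case: (vbasis W) => s /= /eqP hs B.
have sW x : x \in s -> x \in W by move=> xs; rewrite -(span_basis B) memv_span.
have fs := basis_free B.
case: s hs B sW fs => [|w1 [|w2 rest]] /= hs B sW fs; rewrite -hs //= => _.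
exists w1, w2; split; [apply: sW; rewrite inE eqxx // | apply: sW; rewrite !inE eqxx orbT // |].
exact: (catl_free (Y := rest) (X := [:: w1; w2])).
Qed.

Lemma one_in (W : {vspace V}) : \dim W = 1 -> exists w : V, (w != 0)%R /\ W = <[w]>%VS.
Proof.
move: (vbasisP W); case: (vbasis W) => s /= /eqP hs B.
have fs := basis_free B.
case: s hs B fs => [|w [|w2 rest]] /= hs B fs; rewrite -hs //= => _.
exists w; split; first by rewrite -seq1_free.
by rewrite -(span_basis B) span_seq1.
Qed.
End Setup.

Theorem lemma3p3 (r i : nat) (W : {vspace bvec r}) :
  3 <= r -> 1 <= i <= r - 1 -> \dim W = r - i ->
  exists F : {set bvec r},
    is_flat (ground W) F /\
    (restr_iso F K4_indep \/ restr_iso F U34_indep).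
Proof.
move=> r3 /andP [i1 ir] dW.
have dWr : \dim W < r by rewrite dW; lia.
have [uu uW] := out dWr.
case: (leqP 2 (\dim W)) => [d2 | d1].
  have [w1 [w2 [w1W w2W f12]]] := two_in d2.
  have fb : free [:: uu; w1; w2].
    rewrite free_cons f12 andbT; apply: contra uW; apply: subvP.
    by apply/span_subvP => x; rewrite !inE => /orP [] /eqP ->.
  exists ((q uu w1 w2) @: setT); split.
    apply: (flat_of (S := <<[:: uu; w1; w2]>>%VS)).
    - by move=> t; apply: point_span.
    - by move=> t; apply: qW.
    - by move=> v; apply: qmem.
  by right; apply: (restr_of ord0 (q_inj fb) (U34_iso fb)).
have dW1 : \dim W = 1 by move: d1; rewrite dW; lia.
have [w [w0 eW]] := one_in dW1.
have lt : \dim <<[:: uu; w]>>%VS < r by apply: leq_ltn_trans (dim_span _) _; rewrite /=; lia.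
have [a2 a2n] := out lt.
have fb : free [:: a2; uu; w].
  rewrite free_cons a2n free_cons span_seq1 -eW uW /= seq1_free //.
exists ((pe a2 uu w) @: setT); split.
  apply: (flat_of (S := <<[:: a2; uu; w]>>%VS)).
  - by move=> e; apply: peS.
  - by move=> e; apply: (peW fb eW).
  - by move=> v; apply: (pemem eW).
left; apply: (restr_of (@mkedge (@Ordinal 4 0 isT) (@Ordinal 4 1 isT) isT) (pe_inj fb) (K4_iso fb)).
Qed.
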